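(* Let $0<p\le\infty$ and $E=\mathcal{L}^p(I)$. If each scale function $\alpha_n$, $n=1,\dots,N$, is non-null almost everywhere, then the linear operator $\mathcal{P}_0^1:E\to E$, $\mathcal{P}_0^1(b):=0*_Tb$, is injective.
   Context: Let $N\ge 2$, $I=[x_0,x_N]$, $\Delta: x_0<\dots<x_N$ a partition, $L_n(x)=a_nx+b_n$ affine with $L_n(x_0)=x_{n-1}$, $L_n(x_N)=x_n$, $I_1=[x_0,x_1]$, $I_n=(x_{n-1},x_n]$ for $n\ge2$, and $\alpha=(\alpha_1,\dots,\alpha_N)\in(\mathcal{L}^\infty(I))^N$ with $\Lambda:=\operatorname{ess\,sup}\{|\alpha_n(x)|:x\in I,n=1,\dots,N\}<1$. For $f,b\in E$, the fractal convolution $f*_Tb$ is the unique fixed point in $E$ of the contraction $Tg(x):=f(x)+\alpha_n(L_n^{-1}(x))(g-b)(L_n^{-1}(x))$, $x\in I_n$; $0$ denotes the null function. *)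

(* Defs.v *)
From HB Require Import structures.
From mathcomp Require Import all_boot all_order all_algebra.
From mathcomp Require Import all_classical all_reals all_analysis.
Set Implicit Arguments. Unset Strict Implicit. Unset Printing Implicit Defensive.
Import Order.TTheory GRing.Theory Num.Theory.
Local Open Scope classical_set_scope.
Local Open Scope ring_scope.

Section FractalConv.
Variable R : realType.
Let mu := (@lebesgue_measure R).

(* Partition x_0 < ... < x_N is given by x : nat -> R (only x 0 .. x N matter). *)

Definition Iset (N : nat) (x : nat -> R) : set R := `[x 0%N, x N]%classic.

Definition inIn (x : nat -> R) (n : nat) (y : R) : bool :=
  if n == 1%N then (x 0%N <= y) && (y <= x 1%N)
  else (x n.-1 < y) && (y <= x n).

(* L_n(t) = a_n t + b_n, the affine map with L_n(x_0) = x_{n-1}, L_n(x_N) = x_n *)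
Definition Lmap (N : nat) (x : nat -> R) (n : nat) (t : R) : R :=
  x n.-1 + (x n - x n.-1) / (x N - x 0%N) * (t - x 0%N).

Definition Linv (N : nat) (x : nat -> R) (n : nat) (y : R) : R :=
  x 0%N + (x N - x 0%N) / (x n - x n.-1) * (y - x n.-1).

Definition inLp (N : nat) (x : nat -> R) (p : \bar R) (g : R -> R) : Prop :=
  measurable_fun (Iset N x) g /\
  match p with
  | r%:E => (\int[mu]_(y in Iset N x) ((`|g y| `^ r)%:E) < +oo)%E
  | _ => exists M : R, {ae mu, forall y, Iset N x y -> `|g y| <= M}
  end.

(* equality in E: almost everywhere on I *)
Definition ae_eqI (N : nat) (x : nat -> R) (g h : R -> R) : Prop :=
  {ae mu, forall y, Iset N x y -> g y = h y}.

Definition Top (N : nat) (x : nat -> R) (alpha : nat -> R -> R)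
  (f b g : R -> R) (y : R) : R :=
  \sum_(1 <= n < N.+1)
     (if inIn x n y then
        f y + alpha n (Linv N x n y) * (g (Linv N x n y) - b (Linv N x n y))
      else 0).

(* g = f *_T b : g is the (unique) fixed point in E = L^p(I) of T *)
Definition is_fractal_conv (N : nat) (x : nat -> R) (alpha : nat -> R -> R)
  (p : \bar R) (f b g : R -> R) : Prop :=
  inLp N x p g /\ ae_eqI N x g (Top N x alpha f b g).

End FractalConv.

(* Main.v *)
Require Import Defs.
From HB Require Import structures.
From mathcomp Require Import all_boot all_order all_algebra.
From mathcomp Require Import all_classical all_reals all_analysis.
From mathcomp Require Import measurable_realfun ring lra.
Import Order.TTheory GRing.Theory Num.Theory.
Local Open Scope classical_set_scope.
Local Open Scope ring_scope.
Set Implicit Arguments. Unset Strict Implicit. Unset Printing Implicit Defensive.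
Section Aff.
Context (R : realType) (a : R) (k : {posnum R}).
Local Notation mu := (@lebesgue_measure R).
Local Notation T := (measurableTypeR R).
Definition aff (t : T) : T := (a + k%:num * (t : R) : R).

Lemma aff_measurable : measurable_fun [set: T] aff.
Proof.
by apply: measurable_funD => //; apply: measurable_funM.
Qed.

Definition pf (A : set T) : \bar R := mu (aff @^-1` A).

Let pf0 : pf set0 = 0%E.
Proof. by rewrite /pf preimage_set0 measure0. Qed.

Let pf_ge0 A : (0 <= pf A)%E.
Proof. exact: measure_ge0. Qed.

Let pf_sigma : semi_sigma_additive pf.
Proof.
move=> F mF tF mUF; rewrite /pf preimage_bigcup.
apply: measure_semi_sigma_additive.
- by move=> n; rewrite -[X in measurable X]setTI; exact: aff_measurable.
- apply/trivIsetP => /= i j _ _ ij; rewrite -preimage_setI.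
  by move/trivIsetP : tF => /(_ _ _ _ _ ij) ->//; rewrite preimage_set0.
- by rewrite -preimage_bigcup -[X in measurable X]setTI; exact: aff_measurable.
Qed.

HB.instance Definition _ := isMeasure.Build _ _ _ pf pf0 pf_ge0 pf_sigma.

Definition nu := mscale (k%:num%:nng) pf.

Lemma nu_ocitv X : ocitv X -> mu X = nu X.
Proof.
case=> [[u v]] _ <-{X} /=.
rewrite /nu /mscale /= /pf.
have -> : aff @^-1` `]u, v]%classic = `](u - a) / k%:num, (v - a) / k%:num]%classic.
  apply/seteqP; split => t /=; rewrite !in_itv /= /aff.
    move=> /andP[h1 h2]; rewrite ltr_pdivrMr // ler_pdivlMr //.
    apply/andP; split; lra.
  rewrite ltr_pdivrMr // ler_pdivlMr // => /andP[h1 h2].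
  apply/andP; split; lra.
rewrite !lebesgue_measure_itv /=.
rewrite !lte_fin ltr_pM2r ?invr_gt0 //.
have -> : (u - a < v - a) = (u < v) by rewrite ltrD2r.
case: ifP => _; last by rewrite mule0.
rewrite -!EFinB -EFinM; congr (_%:E); field.
by rewrite gt_eqF.
Qed.

End Aff.
Lemma negl_aff (R : realType) (a : R) (k : {posnum R}) (S : set R) :
  (@lebesgue_measure R).-negligible S ->
  (@lebesgue_measure R).-negligible (aff a k @^-1` S).
Proof.
case=> B [mB B0 SB]; exists (aff a k @^-1` B); split.
- by rewrite -[X in measurable X]setTI; exact: aff_measurable.
- have := @lebesgue_measure_unique R (nu a k) (@nu_ocitv R a k) B mB.
  rewrite B0 /nu /mscale /pf /= => /esym /eqP.
  rewrite mule_eq0 eqe gt_eqF //= => /eqP //.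
- by move=> t /SB.
Qed.

Lemma ae_aff (R : realType) (a k : R) (P : R -> Prop) : 0 < k ->
  {ae (@lebesgue_measure R), forall y, P y} ->
  {ae (@lebesgue_measure R), forall t, P (a + k * t)}.
Proof.
move=> k0 H.
exact: (negl_aff a (PosNum k0) H).
Qed.
Lemma xmono (R : realType) (N : nat) (x : nat -> R) :
  (forall i : nat, (i < N)%N -> x i < x i.+1) ->
  forall i j, (i <= j)%N -> (j <= N)%N -> x i <= x j.
Proof.
move=> xinc i j; elim: j => [|j IH]; first by rewrite leqn0 => /eqP ->.
rewrite leq_eqVlt => /orP[/eqP -> //|]; rewrite ltnS => ij jN.
apply: (le_trans (IH ij (ltnW jN))); exact/ltW/xinc.
Qed.

Lemma IsetE (R : realType) (N : nat) (x : nat -> R) y :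
  Iset N x y <-> x 0%N <= y <= x N.
Proof. by rewrite /Iset /= in_itv /=. Qed.

Lemma Top_I1 (R : realType) (N : nat) (x : nat -> R) alpha f b g y :
  (1 <= N)%N ->
  (forall i : nat, (i < N)%N -> x i < x i.+1) ->
  x 0%N <= y <= x 1%N ->
  Top N x alpha f b g y =
  f y + alpha 1%N (Linv N x 1 y) * (g (Linv N x 1 y) - b (Linv N x 1 y)).
Proof.
move=> N1 xinc /andP[y0 y1].
rewrite /Top big_ltn ?ltnS // /inIn /= y0 y1 /=.
rewrite big_nat_cond big1 ?addr0 // => i /andP[/andP[i2 iN] _].
have -> : (i == 1%N) = false by apply/negbTE; rewrite neq_ltn i2 orbT.
have : x 1%N <= x i.-1.
  apply: (xmono xinc).
    by case: i i2 {iN} => [|[|i]].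
  by apply: leq_trans (leq_pred i) _; rewrite -ltnS.
by move=> h; rewrite ltNge (le_trans y1 h).
Qed.
Unset Implicit Arguments. Set Strict Implicit.

Theorem proposition6p1 (R : realType) (N : nat) (x : nat -> R)
  (alpha : nat -> R -> R) (p : \bar R) :
  (2 <= N)%N ->
  (forall i : nat, (i < N)%N -> x i < x i.+1) ->
  (0 < p)%E ->
  (forall n : nat, (1 <= n <= N)%N -> inLp N x +oo%E (alpha n)) ->
  (exists Lam : R, Lam < 1 /\
     forall n : nat, (1 <= n <= N)%N ->
       {ae (@lebesgue_measure R), forall y, Iset N x y -> `|alpha n y| <= Lam}) ->
  (forall n : nat, (1 <= n <= N)%N ->
     {ae (@lebesgue_measure R), forall y, Iset N x y -> alpha n y != 0}) ->
  forall b1 b2 g1 g2 : R -> R,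
    inLp N x p b1 -> inLp N x p b2 ->
    is_fractal_conv N x alpha p (fun _ => 0) b1 g1 ->
    is_fractal_conv N x alpha p (fun _ => 0) b2 g2 ->
    ae_eqI N x g1 g2 ->
    ae_eqI N x b1 b2.
Proof.
move=> N2 xinc _ _ _ Hnz b1 b2 g1 g2 _ _ [_ H1] [_ H2] H12.
have N1 : (1 <= N)%N by apply: ltnW.
have x01 : x 0%N < x 1%N by apply: xinc; apply: leq_trans N2.
have x1N : x 1%N <= x N by apply: (xmono xinc).
have x0N : x 0%N < x N by apply: lt_le_trans x1N.
pose D := x N - x 0%N.
have D0 : 0 < D by rewrite subr_gt0.
pose k := (x 1%N - x 0%N) / D.
have k0 : 0 < k by rewrite divr_gt0 // subr_gt0.
pose a := x 0%N - k * x 0%N.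
have Ha := Hnz 1%N N1.
have H1' := ae_aff a k0 H1.
have H2' := ae_aff a k0 H2.
have H12' := ae_aff a k0 H12.
have FF := ae_filter_ringOfSetsType (@lebesgue_measure R).
apply: (filterS (F := almost_everywhere (@lebesgue_measure R))) (filterI Ha (filterI H12 (filterI H1' (filterI H2' H12')))).
move=> t [ha [h12 [h1 [h2 h12']]]] It.
have [t0 tN] : x 0%N <= t /\ t <= x N by move/IsetE: It => /andP.
have ky : x 0%N <= a + k * t <= x 1%N.
  have kt : 0 <= k * (t - x 0%N) by rewrite mulr_ge0 // ?subr_ge0 // ltW.
  have kt2 : k * (t - x 0%N) <= x 1%N - x 0%N.
    rewrite /k mulrC mulrA ler_pdivrMr //.
    by rewrite mulrC ler_pM2l ?subr_gt0 // /D lerD2r.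
  rewrite /a; apply/andP; split; lra.
have Iy : Iset N x (a + k * t) by apply/IsetE; case/andP: ky => ? ?; apply/andP; split => //; apply: le_trans x1N.
have hL : Linv N x 1 (a + k * t) = t.
  rewrite /Linv /= /a /k -/D; field.
  by apply/andP; split; rewrite gt_eqF // subr_gt0.
move: (h1 Iy) (h2 Iy) (h12' Iy) (h12 It) (ha It).
rewrite !Top_I1 // hL !add0r => -> -> e1 e2 a0.
rewrite e2 in e1.
move/(mulfI a0)/addrI: e1 => /eqP; rewrite eqr_opp => /eqP.
done.
Qed.
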